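(* (a) If $n\ge 1$, $\mathcal{P}=C_n$ and $L=\mathfrak{g}^{\prec}(\mathcal{P})$, then $b(L)=|Rel_{\overline{C}}(\mathcal{P})|=\frac{(n-1)(n-2)}{2}$. (b) If $n\ge 1$, $\mathcal{P}=\mathbf{2\times n}$ and $L=\mathfrak{g}^{\prec}(\mathcal{P})$, then $b(L)=|Rel_{\overline{C}}(\mathcal{P})|=\frac{(n-1)(3n-4)}{2}$. (c) If $m\ge 2$, $n\ge 1$, $\mathcal{P}=T_m(n)$ and $L=\mathfrak{g}^{\prec}(\mathcal{P})$, then $b(L)=|Rel_{\overline{C}}(\mathcal{P})|=\frac{(n-2)m^{n+1}+(1-n)m^n+m^2}{(m-1)^2}$.
   Context: All Lie algebras are over an algebraically closed field $\mathbf{k}$ of characteristic zero. For a finite poset $\mathcal{P}$, write $x\prec y$ for strict relations; a strict relation $p\prec q$ is covering if there is no $z$ with $p\prec z\prec q$, and $Rel_{\overline{C}}(\mathcal{P})$ is the set of non-covering strict relations. The nilpotent Lie poset algebra $\mathfrak{g}^{\prec}(\mathcal{P})$ is the Lie algebra (under the commutator bracket) of $|\mathcal{P}|\times|\mathcal{P}|$ matrices spanned by the matrix units $E_{p,q}$ with $p\prec q$ (rows and columns indexed by $\mathcal{P}$). The breadth of a Lie algebra $L$ is $b(L)=\max_{x\in L}\operatorname{rank}(\mathrm{ad}_x)$, where $\mathrm{ad}_x=[x,-]$. Posets: $C_n$ is the chain $1\prec 2\prec\cdots\prec n$. $\mathbf{2\times n}$ is the poset on $\{i_j : 1\le i\le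 n,\ 1\le j\le 2\}$ with $i_j\preceq i'_{j'}$ iff $i\le i'$ and $j\le j'$ (product of a 2-chain and an $n$-chain; covering relations $i_j\prec (i+1)_j$ and $i_1\prec i_2$). $T_m(n)$ (for $m\ge 2$) is the rooted complete $m$-ary tree of depth $n$: the poset on $\{i_k : 1\le k\le n,\ 1\le i\le m^{k-1}\}$ whose covering relations are $i_k\prec j_{k+1}$ for $1\le k<n$, $1\le i\le m^{k-1}$ and $m(i-1)+1\le j\le mi$, with the order being the transitive closure of these. *)

(* Defs.v *)
From HB Require Import structures.
From mathcomp Require Import all_boot all_order all_algebra.
Set Implicit Arguments. Unset Strict Implicit. Unset Printing Implicit Defensive.
Import GRing.Theory Num.Theory.
Local Open Scope ring_scope.

(* A finite poset is given by a finite type T and its strict order lt. *)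
Section PosetAlgebra.
Variables (K : fieldType) (T : finType) (lt : rel T).

Definition covering (p q : T) : bool :=
  lt p q && [forall z, ~~ (lt p z && lt z q)].
Definition rel_noncovering : {set T * T} :=
  [set pq | lt pq.1 pq.2 && ~~ covering pq.1 pq.2].

Definition Emx (p q : T) : 'M[K]_#|T| := delta_mx (enum_rank p) (enum_rank q).

(* The nilpotent Lie poset algebra g^<(P), as a row space of vectorized
   matrices: spanned by the E_{p,q} with p < q. *)
Definition poset_alg : 'M[K]_(#|{: T * T}|, #|T| * #|T|) :=
  \matrix_(k < #|{: T * T}|)
    (let pq := enum_val k in if lt pq.1 pq.2 then mxvec (Emx pq.1 pq.2) else 0).

Definition in_poset_alg (x : 'M[K]_#|T|) : bool := (mxvec x <= poset_alg)%MS.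

Definition ad (x y : 'M[K]_#|T|) : 'M[K]_#|T| := x *m y - y *m x.

(* rank of ad_x : L -> L = dimension of the image ad_x(L), which is spanned
   by the images of the basis E_{p,q}, p < q. *)
Definition ad_rank (x : 'M[K]_#|T|) : nat :=
  \rank (\matrix_(k < #|{: T * T}|)
    (let pq := enum_val k in
     if lt pq.1 pq.2 then mxvec (ad x (Emx pq.1 pq.2)) else 0)).

Definition breadth_eq (r : nat) : Prop :=
  (exists2 x, in_poset_alg x & ad_rank x = r) /\
  (forall x, in_poset_alg x -> (ad_rank x <= r)%N).
End PosetAlgebra.

(* The chain C_n : 1 < 2 < ... < n  (0-based: 'I_n). *)
Definition chain_lt (n : nat) : rel 'I_n := fun i j => (i < j)%N.

(* 2 x n : elements i_j encoded as (i-1, j-1) in 'I_n * 'I_2, product order. *)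
Definition two_n_lt (n : nat) : rel ('I_n * 'I_2) :=
  fun a b => [&& (a.1 <= b.1)%N, (a.2 <= b.2)%N & a != b].

(* T_m(n): element i_k encoded 0-based as (k-1, i-1), with i-1 < m^(k-1). *)
Definition tree_vert (m n : nat) := {p : 'I_n * 'I_(m ^ n.-1) | (p.2 < m ^ p.1)%N}.
(* covering relations: i_k < j_(k+1) iff m(i-1)+1 <= j <= m i,
   i.e. 0-based (j-1) %/ m = i-1. *)
Definition tree_cover (m n : nat) : rel (tree_vert m n) :=
  fun a b => ((val a).1.+1 == (val b).1) && ((val b).2 %/ m == (val a).2)%N.
Definition tree_lt (m n : nat) : rel (tree_vert m n) :=
  fun a b => connect (@tree_cover m n) a b && (a != b).

(* Main.v *)
Require Import Defs.
From mathcomp Require Import all_boot all_order all_algebra.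
From mathcomp Require Import ring lra zify.
Set Implicit Arguments. Unset Strict Implicit. Unset Printing Implicit Defensive.
Import GRing.Theory Num.Theory.
Local Open Scope ring_scope.

Section Generic.
Variables (K : fieldType) (T : finType) (lt : rel T).
Hypothesis ltirr : irreflexive lt.
Hypothesis lttr : transitive lt.

Local Notation N := (rel_noncovering lt).
Local Notation E := (Emx K).

Definition Dmx : 'M[K]_(#|N|, #|T| * #|T|) :=
  \matrix_(i < #|N|) mxvec (E (enum_val i).1 (enum_val i).2).

Lemma EmxE (p q : T) : E p q = delta_mx (enum_rank p) (enum_rank q).
Proof. by []. Qed.

Lemma Emx_mul (a b c d : T) : E a b *m E c d = E a d *+ (b == c).
Proof. by rewrite !EmxE mul_delta_mx_cond (inj_eq enum_rank_inj). Qed.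

Lemma mxvec_index_inj (i i' j j' : 'I_#|T|) :
  mxvec_index i j = mxvec_index i' j' -> i = i' /\ j = j'.
Proof.
move=> h.
have := mxvecE (delta_mx i j : 'M[K]_(#|T|,#|T|)) i' j'.
rewrite -h mxvecE !mxE !eqxx /=.
by case: (i' =P i) => [->|_]; case: (j' =P j) => [->|_] //= /eqP; rewrite ?andbF ?mulr0n oner_eq0.
Qed.

Definition gN (i : 'I_#|N|) : 'I_(#|T| * #|T|) :=
  mxvec_index (enum_rank (enum_val i).1) (enum_rank (enum_val i).2).

Lemma DmxE i l : Dmx i l = (l == gN i)%:R.
Proof. by rewrite mxE EmxE mxvec_delta mxE. Qed.

Lemma gN_inj : injective gN.
Proof.
move=> i j /mxvec_index_inj [/enum_rank_inj h1 /enum_rank_inj h2].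
apply: enum_val_inj; move: h1 h2; case: (enum_val i) => a b; case: (enum_val j) => c d /=.
by move=> -> ->.
Qed.

Lemma rankD : \rank Dmx = #|N|.
Proof.
apply/eqP; rewrite eqn_leq rank_leq_row /=.
have DD : Dmx *m Dmx^T = 1%:M.
  apply/matrixP => i j.
  rewrite [LHS]mxE; under eq_bigr => l _ do rewrite [Dmx^T _ _]mxE !DmxE.
  rewrite (bigD1 (gN i)) //= big1 => [|l /negbTE nl]; last by rewrite nl mul0r.
  rewrite eqxx mul1r addr0 (inj_eq gN_inj) eq_sym mxE.
  by rewrite eq_sym.
by rewrite -{1}(mxrank1 K #|N|) -DD mxrankM_maxl.
Qed.

Definition noncovb (p r : T) := lt p r && ~~ covering lt p r.

Lemma noncov_sub (p r : T) : noncovb p r -> (mxvec (E p r) <= Dmx)%MS.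
Proof.
move=> h; have Hin : (p, r) \in N by rewrite inE.
apply/(eq_row_sub (enum_rank_in Hin (p, r))).
by rewrite rowK enum_rankK_in.
Qed.

Lemma noncov_of (a b c : T) : lt a b -> lt b c -> noncovb a c.
Proof.
move=> ab bc; rewrite /noncovb /covering (lttr ab bc) /=.
by apply/negP => /forallP /(_ b); rewrite ab bc.
Qed.

Lemma ad_suml (I : Type) (r : seq I) (P : pred I) (F : I -> 'M[K]_#|T|) Y :
  ad (\sum_(i <- r | P i) F i) Y = \sum_(i <- r | P i) ad (F i) Y.
Proof. by rewrite /ad mulmx_suml mulmx_sumr -sumrB. Qed.

Lemma adZl a (X Y : 'M[K]_#|T|) : ad (a *: X) Y = a *: ad X Y.
Proof. by rewrite /ad -scalemxAl -scalemxAr scalerBr. Qed.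

Lemma subD_sub m1 m2 n (A B : 'M[K]_(m1, n)) (C : 'M[K]_(m2, n)) :
  (A <= C)%MS -> (B <= C)%MS -> (A - B <= C)%MS.
Proof. by move=> hA hB; rewrite addmx_sub // -scaleN1r scalemx_sub. Qed.

Lemma ad_sub_D x : in_poset_alg lt x ->
  forall p q, lt p q -> (mxvec (ad x (E p q)) <= Dmx)%MS.
Proof.
case/submxP => w hw p q hpq.
have -> : x = vec_mx (w *m poset_alg K lt) by rewrite -hw mxvecK.
rewrite mulmx_sum_row linear_sum ad_suml linear_sum summx_sub // => i _.
rewrite linearZ adZl linearZ scalemx_sub // rowK /=.
case: (enum_val i) => a b /=.
case: ifP => hab; last by rewrite linear0 /ad mul0mx mulmx0 subrr linear0 sub0mx.
rewrite mxvecK /ad !Emx_mul linearB subD_sub //.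
  case: (b =P p) => [bp|_]; last by rewrite mulr0n linear0 sub0mx.
  by rewrite mulr1n noncov_sub // (noncov_of hab) // bp.
case: (q =P a) => [qa|_]; last by rewrite mulr0n linear0 sub0mx.
by rewrite mulr1n noncov_sub // (noncov_of hpq) // qa.
Qed.

Lemma upper x : in_poset_alg lt x -> (@ad_rank K _ lt x <= #|N|)%N.
Proof.
move=> hx; rewrite /ad_rank -rankD; apply: mxrankS; apply/row_subP => k.
rewrite rowK; case: ifP => h; last by rewrite sub0mx.
exact: ad_sub_D.
Qed.

Lemma sum_sel1 (V : nmodType) (F : T -> V) q : \sum_b F b *+ (b == q) = F q.
Proof. by rewrite (bigD1 q) //= eqxx big1 ?addr0 // => b /negbTE ->. Qed.

Lemma sum_sel (V : nmodType) (P : pred T) (F : T -> V) q :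
  \sum_(b | P b) F b *+ (b == q) = F q *+ P q.
Proof.
rewrite big_mkcond /= -(sum_sel1 (fun b => F b *+ P b) q).
by apply: eq_bigr => b _; case: (P b); case: (b == q).
Qed.

Section Lower.
Variable S : rel T.
Hypothesis HS : forall a b, S a b -> lt a b.
Hypothesis Hcond : forall p r, noncovb p r ->
  exists q, [/\ S p q, lt q r & forall a, S a q -> a = p].

Definition x0 : 'M[K]_#|T| := \sum_a \sum_(b | S a b) E a b.

Lemma x0_in : in_poset_alg lt x0.
Proof.
rewrite /in_poset_alg linear_sum summx_sub // => a _.
rewrite linear_sum summx_sub // => b Sab.
by apply/(eq_row_sub (enum_rank (a, b))); rewrite rowK enum_rankK /= HS.
Qed.

Lemma x0E1 q r : x0 *m E q r = \sum_a E a r *+ S a q.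
Proof.
rewrite mulmx_suml; apply: eq_bigr => a _; rewrite mulmx_suml.
under eq_bigr => b _ do rewrite Emx_mul.
exact: sum_sel.
Qed.

Lemma x0E2 q r : E q r *m x0 = \sum_(b | S r b) E q b.
Proof.
transitivity (\sum_a (\sum_(b | S a b) E q b) *+ (a == r)); last exact: sum_sel1.
rewrite /x0 mulmx_sumr; apply: eq_bigr => a _; rewrite mulmx_sumr -sumrMnl; apply: eq_bigr => b _.
by rewrite Emx_mul eq_sym.
Qed.

Definition Mx x : 'M[K]_(#|{: T * T}|, #|T| * #|T|) := \matrix_(k < #|{: T * T}|)
    (let pq := enum_val k in
     if lt pq.1 pq.2 then mxvec (ad x (E pq.1 pq.2)) else 0).

Lemma lower_sub p r : noncovb p r -> (mxvec (E p r) <= Mx x0)%MS.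
Proof.
suff: forall k r, (#|[set z | lt r z]| < k)%N -> forall p, noncovb p r ->
  (mxvec (E p r) <= Mx x0)%MS by move=> /(_ _ r (ltnSn _) p).
elim=> // k IH {}r hk {}p hpr.
case: (Hcond hpr) => q [Spq ltqr uq].
have e : E p r = ad x0 (E q r) + \sum_(b | S r b) E q b.
  rewrite /ad x0E1 x0E2 subrK.
  transitivity (\sum_a E a r *+ (a == p)); first by rewrite sum_sel1.
  apply: eq_bigr => a _; congr (_ *+ nat_of_bool _); by apply/idP/idP => [/eqP ->|/uq ->].
rewrite e linearD addmx_sub //.
  by apply/(eq_row_sub (enum_rank (q, r))); rewrite rowK enum_rankK /= ltqr.
rewrite linear_sum summx_sub // => b Srb; apply: IH; last first.
  exact: noncov_of ltqr (HS Srb).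
have pr : [set z | lt b z] \proper [set z | lt r z].
  apply/properP; split.
    by apply/subsetP => z; rewrite !inE; apply: lttr (HS Srb).
  by exists b; rewrite !inE ?ltirr // HS.
exact: leq_trans (proper_card pr) hk.
Qed.

Lemma breadth_gen : breadth_eq K lt #|N|.
Proof.
split; last exact: upper.
exists x0; first exact: x0_in.
apply/eqP; rewrite eqn_leq upper ?x0_in //=.
rewrite -{1}rankD; apply: (@mxrankS _ _ _ _ _ (Mx x0)); apply/row_subP => i.
rewrite rowK; apply: lower_sub.
by have := enum_valP i; rewrite inE.
Qed.
End Lower.

End Generic.


Lemma card_sumb (T : finType) (P : pred T) : #|[set x | P x]| = (\sum_x (P x : nat))%N.
Proof. by rewrite -sum1_card big_mkcond /=; apply: eq_bigr => x _; rewrite inE; case: (P x). Qed.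

Lemma sum_ltc n c : (\sum_(i < n) ((i < c)%N : nat))%N = minn n c.
Proof.
elim: n => [|n IH]; first by rewrite big_ord0 min0n.
rewrite big_ord_recr /= IH; case: (ltnP n c) => h /=; lia.
Qed.

Lemma sumS1 n : (2 * \sum_(j < n) j.-1 = (n - 1) * (n - 2))%N.
Proof.
elim: n => [|n IH]; first by rewrite big_ord0.
rewrite big_ord_recr /= mulnDr IH; case: n {IH} => [|n] //=; nia.
Qed.

Lemma sumS0 n : (2 * \sum_(j < n) j = n * (n - 1))%N.
Proof.
elim: n => [|n IH]; first by rewrite big_ord0.
rewrite big_ord_recr /= mulnDr IH; case: n {IH} => [|n] //=; nia.
Qed.

Lemma test (S k : nat) : (2 * S = k.+1 * k)%N -> (S%:R : rat) = ((k.+2%:R - 1) * (k.+2%:R - 2)) / 2.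
Proof.
move=> h.
have h' : (2 * S)%:R = (k.+1 * k)%:R :> rat by rewrite h.
rewrite !natrM in h'.
have -> : (S%:R : rat) = (2%:R * S%:R) / 2 by field.
rewrite h' -[k.+2]addn2 -[k.+1]addn1 !natrD; by field.
Qed.

Lemma sum_pairE (I J : finType) (G : I * J -> nat) :
  (\sum_(p : I * J) G p = \sum_i \sum_j G (i, j))%N.
Proof. by rewrite pair_bigA; apply: eq_bigr => [[i j]] _. Qed.

Lemma dsum1 n : (\sum_(i < n) \sum_(j < n) ((i.+1 < j)%N : nat) = \sum_(j < n) j.-1)%N.
Proof.
rewrite exchange_big /=; apply: eq_bigr => j _.
have -> : (\sum_(i < n) ((i.+1 < j)%N : nat))%N = (\sum_(i < n) ((i < j.-1)%N : nat))%N.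
  by apply: eq_bigr => i _; case: j => [[|j]].
by rewrite sum_ltc; apply/minn_idPr; case: j => [[|j]] /=; lia.
Qed.

Lemma dsum0 n : (\sum_(i < n) \sum_(j < n) ((i < j)%N : nat) = \sum_(j < n) j)%N.
Proof.
rewrite exchange_big /=; apply: eq_bigr => j _.
by rewrite sum_ltc; apply/minn_idPr; apply: ltnW.
Qed.

Section Chain.
Variable n : nat.

Lemma chain_irr : irreflexive (@chain_lt n).
Proof. by move=> i; rewrite /chain_lt ltnn. Qed.
Lemma chain_tr : transitive (@chain_lt n).
Proof. by move=> j i k; rewrite /chain_lt; apply: ltn_trans. Qed.

Lemma chain_noncov (i j : 'I_n) : noncovb (@chain_lt n) i j = (i.+1 < j)%N.
Proof.
apply/idP/idP.
  case/andP => hij; rewrite /covering hij /= => /forallPn [z].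
  rewrite negbK /chain_lt => /andP [iz zj]; exact: leq_ltn_trans iz zj.
move=> h; have hij : (i < j)%N by apply: ltnW.
rewrite /noncovb /covering /chain_lt hij /=; apply/forallPn.
by exists (Ordinal (ltn_trans h (ltn_ord j))); rewrite negbK /= ltnSn h.
Qed.

Lemma chain_count : #|rel_noncovering (@chain_lt n)| = (\sum_(j < n) j.-1)%N.
Proof.
have -> : rel_noncovering (@chain_lt n) = [set x : 'I_n * 'I_n | (x.1.+1 < x.2)%N].
  by apply/setP => x; rewrite !inE -chain_noncov.
by rewrite card_sumb sum_pairE dsum1.
Qed.

Lemma chain_breadth (K : fieldType) :
  breadth_eq K (@chain_lt n) #|rel_noncovering (@chain_lt n)|.
Proof.
apply: (@breadth_gen K _ _ chain_irr chain_tr (fun i j : 'I_n => i.+1 == j :> nat)).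
  by move=> a b /eqP h; rewrite /chain_lt -h.
move=> p r; rewrite chain_noncov => h.
exists (Ordinal (ltn_trans h (ltn_ord r))); split => //=.
by move=> a /eqP [] /val_inj.
Qed.
End Chain.

Section TwoN.
Variable n : nat.
Local Notation P := ('I_n * 'I_2)%type.

Lemma pairE (a b : P) : (a == b) = (a.1 == b.1 :> nat) && (a.2 == b.2 :> nat).
Proof. by case: a b => [i s] [j t]. Qed.

Lemma two_irr : irreflexive (@two_n_lt n).
Proof. by move=> a; rewrite /two_n_lt eqxx !andbF. Qed.

Lemma two_tr : transitive (@two_n_lt n).
Proof.
move=> b a c; rewrite /two_n_lt !pairE.
move=> /and3P [h1 h2 h3] /and3P [h4 h5 h6]; apply/and3P; split; lia.
Qed.

Lemma two_noncov (a b : P) : noncovb (@two_n_lt n) a b =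
  (a.2 <= b.2)%N && (if a.2 == b.2 :> nat then (a.1.+1 < b.1)%N else (a.1 < b.1)%N).
Proof.
case: a b => [i s] [j t] /=.
have s2 := ltn_ord s; have t2 := ltn_ord t; have jn := ltn_ord j.
apply/idP/idP.
  case/andP => hij; rewrite /covering hij /= => /forallPn [[z u]].
  rewrite negbK /two_n_lt !pairE /= => /andP [/and3P [h1 h2 h3] /and3P [h4 h5 h6]].
  move: hij; rewrite /two_n_lt pairE /= => /and3P [h7 h8 h9].
  have u2 := ltn_ord u.
  apply/andP; split => //; case: eqP => e; lia.
move=> /andP [st h].
have hab : two_n_lt (i, s) (j, t).
  rewrite /two_n_lt pairE /= st; move: h; case: eqP => e h; apply/andP; split; try lia.
rewrite /noncovb /covering hab /=; apply/forallPn.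
move: h; case: eqP => e h.
  exists (Ordinal (ltn_trans h jn), s); rewrite negbK /two_n_lt !pairE /=.
  apply/andP; split; apply/and3P; split; try lia.
exists (j, s); rewrite negbK /two_n_lt !pairE /=.
apply/andP; split; apply/and3P; split; try lia.
Qed.

Lemma two_count : #|rel_noncovering (@two_n_lt n)| =
   (2 * \sum_(j < n) j.-1 + \sum_(j < n) j)%N.
Proof.
have -> : rel_noncovering (@two_n_lt n) = [set x : P * P |
  (x.1.2 <= x.2.2)%N && (if x.1.2 == x.2.2 :> nat then (x.1.1.+1 < x.2.1)%N else (x.1.1 < x.2.1)%N)].
  by apply/setP => x; rewrite !inE -two_noncov.
rewrite card_sumb sum_pairE.
under eq_bigr => a _ do rewrite sum_pairE.
rewrite sum_pairE.
under eq_bigr => i _ do rewrite exchange_big.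
rewrite -dsum1 -dsum0 big_distrr -big_split /=; apply: eq_bigr => i _.
rewrite big_distrr -big_split /=; apply: eq_bigr => j _.
rewrite !big_ord_recr !big_ord0 /=.
case: (ltnP i j) => h; case: (ltnP i.+1 j) => h'; lia.
Qed.

Lemma two_breadth (K : fieldType) :
  breadth_eq K (@two_n_lt n) #|rel_noncovering (@two_n_lt n)|.
Proof.
apply: (@breadth_gen K _ _ two_irr two_tr
  (fun a b : P => (a.2 == b.2 :> nat) && (a.1.+1 == b.1 :> nat))).
  move=> [i s] [j t] /= /andP [/eqP e1 /eqP e2].
  rewrite /two_n_lt pairE /=; apply/and3P; split; lia.
move=> [i s] [j t]; rewrite two_noncov /= => /andP [st h].
have hi : (i.+1 < n)%N.
  by move: h; case: eqP => _ h; apply: leq_ltn_trans (ltn_ord j); lia.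
exists (Ordinal hi, s); split => /=.
- by rewrite !eqxx.
- by rewrite /two_n_lt pairE /=; move: h; case: eqP => e h; apply/and3P; split; lia.
- move=> [k u] /= /andP [/eqP e1 /eqP e2]; apply/eqP; rewrite pairE /=; apply/andP; split; apply/eqP; lia.
Qed.

End TwoN.

Lemma half_nat (Q E : nat) : (2 * Q = E)%N -> (Q%:R : rat) = E%:R / 2.
Proof. move=> h; rewrite -h natrM; by field. Qed.

Lemma rat_a n : (1 <= n)%N -> (#|rel_noncovering (@chain_lt n)|%:R : rat)
       = ((n%:R - 1) * (n%:R - 2)) / 2.
Proof.
rewrite chain_count; case: n => [|[|l]] // _.
  by rewrite big_ord_recr big_ord0 /= subrr !mul0r.
rewrite (half_nat (sumS1 _)) /= subn1 /= subn2 /= natrM.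
rewrite -[l.+2]addn2 -[l.+1]addn1 !natrD; by field.
Qed.

Lemma rat_b n : (1 <= n)%N -> (#|rel_noncovering (@two_n_lt n)|%:R : rat)
       = ((n%:R - 1) * (3 * n%:R - 4)) / 2.
Proof.
rewrite two_count; case: n => [|[|l]] // _.
  by rewrite !big_ord_recr !big_ord0 /= subrr !mul0r.
have h : (2 * (2 * \sum_(j < l.+2) j.-1 + \sum_(j < l.+2) j) = 2 * (l.+1 * l) + l.+2 * l.+1)%N.
  by have := sumS1 l.+2; have := sumS0 l.+2; lia.
rewrite (half_nat h) natrD !natrM.
rewrite -[l.+2]addn2 -[l.+1]addn1 !natrD; by field.
Qed.

Local Close Scope ring_scope.

Section Tree.
Variables m n : nat.
Hypothesis hm : (1 < m)%N.
Local Notation V := (tree_vert m n).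
Local Notation cov := (@tree_cover m n).
Local Notation tlt := (@tree_lt m n).

Definition lev (a : V) : nat := (val a).1.
Definition idx (a : V) : nat := (val a).2.

Lemma idx_lt a : (idx a < m ^ lev a)%N. Proof. exact: valP a. Qed.
Lemma lev_lt a : (lev a < n)%N. Proof. exact: ltn_ord. Qed.
Lemma idx_ltM a : (idx a < m ^ n.-1)%N. Proof. exact: ltn_ord. Qed.

Lemma vertE (a b : V) : (a == b) = (lev a == lev b) && (idx a == idx b).
Proof. by rewrite -val_eqE; case: a b => [[i j] ?] [[k l] ?]. Qed.

Lemma coverE (a b : V) : cov a b = ((lev a).+1 == lev b) && (idx b %/ m == idx a).
Proof. by []. Qed.

Lemma m0 : (0 < m)%N. Proof. exact: ltnW. Qed.

Lemma path_lem s (a : V) : path cov a s ->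
  lev (last a s) = (lev a + size s)%N /\ idx (last a s) %/ m ^ (size s) = idx a.
Proof.
elim: s a => [|b s IH] a /=; first by rewrite addn0 expn0 divn1.
case/andP => /andP [/eqP h1 /eqP h2] /IH [e1 e2]; split.
  by rewrite e1; move: h1; rewrite /lev; lia.
by rewrite expnSr divnMA e2 h2.
Qed.

Lemma anc_p1 b d : (lev b - d < n)%N.
Proof. exact: leq_ltn_trans (leq_subr d _) (lev_lt b). Qed.
Lemma anc_p2 b d : (idx b %/ m ^ d < m ^ n.-1)%N.
Proof. exact: leq_ltn_trans (leq_div _ _) (idx_ltM b). Qed.
Lemma anc_p3 b d : (idx b %/ m ^ d < m ^ (lev b - d))%N.
Proof.
rewrite ltn_divLR ?expn_gt0 ?m0 // -expnD; apply: leq_trans (idx_lt b) _.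
rewrite leq_exp2l //; lia.
Qed.

Definition anc (b : V) (d : nat) : V :=
  exist _ (Ordinal (anc_p1 b d), Ordinal (anc_p2 b d)) (anc_p3 b d).

Lemma lev_anc b d : lev (anc b d) = (lev b - d)%N. Proof. by []. Qed.
Lemma idx_anc b d : idx (anc b d) = (idx b %/ m ^ d)%N. Proof. by []. Qed.

Lemma anc_conn b d : (d <= lev b)%N -> connect cov (anc b d) b.
Proof.
elim: d => [|d IH] h.
  have -> : anc b 0 = b by apply/eqP; rewrite vertE lev_anc idx_anc subn0 expn0 divn1 !eqxx.
  exact: connect0.
apply: connect_trans (IH (ltnW h)); apply: connect1.
rewrite coverE !lev_anc !idx_anc expnSr divnMA eqxx andbT; apply/eqP; lia.
Qed.

Lemma conn_char a b : connect cov a b =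
  (lev a <= lev b)%N && (idx b %/ m ^ (lev b - lev a) == idx a).
Proof.
apply/idP/idP.
  case/connectP => s hp ->; have [e1 e2] := path_lem hp.
  by rewrite e1 leq_addr addKn e2 eqxx.
case/andP => hl /eqP hi.
have -> : a = anc b (lev b - lev a).
  by apply/eqP; rewrite vertE lev_anc idx_anc hi eqxx andbT; apply/eqP; lia.
apply: anc_conn; exact: leq_subr.
Qed.

Lemma lt_char a b : tlt a b =
  (lev a < lev b)%N && (idx b %/ m ^ (lev b - lev a) == idx a).
Proof.
rewrite /tree_lt conn_char vertE.
case: (ltngtP (lev a) (lev b)) => h //=; first by rewrite andbT.
by rewrite h subnn expn0 divn1 eq_sym; case: (idx a == idx b).
Qed.

Lemma tree_irr : irreflexive tlt.
Proof. by move=> a; rewrite /tree_lt eqxx andbF. Qed.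

Lemma tree_tr : transitive tlt.
Proof.
move=> b a c; rewrite !lt_char => /andP [h1 /eqP e1] /andP [h2 /eqP e2].
rewrite (ltn_trans h1 h2) /=.
have -> : (lev c - lev a = (lev c - lev b) + (lev b - lev a))%N by lia.
by rewrite expnD divnMA e2 e1.
Qed.

Lemma cover_lt a b : cov a b -> tlt a b.
Proof.
rewrite coverE lt_char => /andP [/eqP h1 /eqP h2].
rewrite -h1 ltnSn subSnn expn1 h2 eqxx //.
Qed.

Definition qv (a b : V) := anc b (lev b - (lev a).+1).

Lemma qv_prop a b : ((lev a).+1 < lev b)%N -> (idx b %/ m ^ (lev b - lev a) = idx a)%N ->
  cov a (qv a b) /\ tlt (qv a b) b.
Proof.
move=> h hi; rewrite /qv coverE lt_char lev_anc idx_anc.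
have e1 : (lev b - (lev b - (lev a).+1) = (lev a).+1)%N by lia.
rewrite e1 eqxx /= -divnMA -expnSr.
have e2 : ((lev b - (lev a).+1).+1 = lev b - lev a)%N by lia.
rewrite e2 hi eqxx; split => //; apply/andP; split => //; lia.
Qed.

Lemma noncov_char a b : noncovb tlt a b =
  ((lev a).+1 < lev b)%N && (idx b %/ m ^ (lev b - lev a) == idx a).
Proof.
apply/idP/idP.
  case/andP => hlt; rewrite /covering hlt /= => /forallPn [z].
  rewrite negbK !lt_char => /andP [/andP [h1 _] /andP [h2 _]].
  move: hlt; rewrite lt_char => /andP [_ ->]; rewrite andbT.
  exact: leq_ltn_trans h1 h2.
case/andP => h /eqP hi.
have [c1 c2] := qv_prop h hi.
have hab : tlt a b by apply: tree_tr (cover_lt c1) c2.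
rewrite /noncovb /covering hab /=; apply/forallPn; exists (qv a b).
by rewrite negbK (cover_lt c1) c2.
Qed.

Lemma tree_breadth (K : fieldType) :
  breadth_eq K tlt #|rel_noncovering tlt|.
Proof.
apply: (@breadth_gen K _ _ tree_irr tree_tr cov); first exact: cover_lt.
move=> p r; rewrite noncov_char => /andP [h /eqP hi].
have [c1 c2] := qv_prop h hi.
exists (qv p r); split => // a ca.
move: ca c1; rewrite !coverE => /andP [/eqP e1 /eqP e2] /andP [/eqP e3 /eqP e4].
apply/eqP; rewrite vertE; apply/andP; split; apply/eqP.
  by move: e1 e3; rewrite /lev; lia.
by rewrite -e2 -e4.
Qed.

Lemma sum_D c : (\sum_(d < n) ((2 <= d <= c)%N : nat) = minn n c.+1 - 2)%N.
Proof.
elim: n => [|k IH]; first by rewrite big_ord0.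
rewrite big_ord_recr /= IH.
case: (leqP 2 k) => h1; case: (leqP k c) => h2 /=; lia.
Qed.

Lemma card_noncov_b b : #|[set a | noncovb tlt a b]| = (lev b).-1.
Proof.
pose D := [set d : 'I_n | (2 <= d <= lev b)%N].
have -> : [set a | noncovb tlt a b] = (fun d : 'I_n => anc b d) @: D.
  apply/setP => a; rewrite inE noncov_char; apply/idP/imsetP.
    case/andP => h /eqP hi.
    have hd : (lev b - lev a < n)%N by apply: leq_ltn_trans (leq_subr _ _) (lev_lt b).
    exists (Ordinal hd); first by rewrite inE /=; apply/andP; split; lia.
    apply/eqP; rewrite vertE lev_anc idx_anc /= hi eqxx andbT; apply/eqP; lia.
  case=> d; rewrite inE => /andP [d1 d2] ->.
  rewrite lev_anc idx_anc.
  have -> : (lev b - (lev b - d) = d)%N by lia.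
  rewrite eqxx andbT; lia.
rewrite card_in_imset; last first.
  move=> d1 d2; rewrite !inE => /andP [_ h1] /andP [_ h2] /(congr1 lev).
  rewrite !lev_anc => e; apply: val_inj => /=; lia.
rewrite card_sumb sum_D; have := lev_lt b; lia.
Qed.

Lemma big_sig_nat (X : finType) (P : pred X) (F : X -> nat) :
  (\sum_(x : {x | P x}) F (val x) = \sum_(x | P x) F x)%N.
Proof.
rewrite (reindex_omap (val : {x | P x} -> X) insub); last first.
  by move=> i Pi; rewrite insubT.
apply: eq_bigl => -[i Pi] /=; rewrite insubT /=.
by rewrite Pi; apply/esym/eqP; congr Some; apply: val_inj.
Qed.

Lemma tree_count : #|rel_noncovering tlt| = (\sum_(k < n) k.-1 * m ^ k)%N.
Proof.
have -> : rel_noncovering tlt = [set x : V * V | noncovb tlt x.1 x.2].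
  by apply/setP => x; rewrite !inE.
rewrite card_sumb sum_pairE exchange_big /=.
under eq_bigr => b _ do rewrite -card_sumb card_noncov_b.
rewrite (@big_sig_nat _ _ (fun x : 'I_n * 'I_(m ^ n.-1) => (x.1).-1)).
rewrite big_mkcond sum_pairE; apply: eq_bigr => k _.
rewrite (eq_bigr (fun i : 'I_(m ^ n.-1) => k.-1 * (i < m ^ k)%N)); last first.
  by move=> i _ /=; case: ifP; rewrite ?muln1 ?muln0.
rewrite -big_distrr sum_ltc; congr (_ * _); apply/minn_idPr.
rewrite leq_exp2l //; have := ltn_ord k; lia.
Qed.

End Tree.

Local Open Scope ring_scope.

Lemma tree_sum_rat (m n : nat) :
  ((\sum_(k < n.+1) k.-1 * m ^ k)%N%:R : rat) * (m%:R - 1) ^+ 2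
  = (n%:R - 1) * m%:R ^+ n.+2 - n%:R * m%:R ^+ n.+1 + m%:R ^+ 2.
Proof.
elim: n => [|n IH].
  rewrite big_ord_recr big_ord0 /=; ring.
rewrite big_ord_recr /= natrD mulrDl IH natrM natrX -[n.+1]addn1 natrD.
rewrite !exprS; ring.
Qed.

Lemma rat_c m n : (2 <= m)%N -> (1 <= n)%N ->
  (#|rel_noncovering (@tree_lt m n)|%:R : rat)
   = ((n%:R - 2) * m%:R ^+ n.+1 + (1 - n%:R) * m%:R ^+ n + m%:R ^+ 2)
     / (m%:R - 1) ^+ 2.
Proof.
move=> hm; case: n => [|k] // _.
rewrite tree_count //.
have hnz : (m%:R - 1) ^+ 2 != 0 :> rat.
  rewrite expf_neq0 // subr_eq0 (eqr_nat rat m 1); by case: m hm => [|[|]].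
rewrite -(mulfK hnz (_%:R)) tree_sum_rat; congr (_ / _).
rewrite -[k.+1]addn1 natrD; ring.
Qed.

Unset Implicit Arguments. Set Strict Implicit.

Theorem theorem2 (K : closedFieldType) (HK : [pchar K] =i pred0) :
  (forall n : nat, (1 <= n)%N ->
     breadth_eq K (@chain_lt n) #|rel_noncovering (@chain_lt n)| /\
     (#|rel_noncovering (@chain_lt n)|%:R : rat)
       = ((n%:R - 1) * (n%:R - 2)) / 2) /\
  (forall n : nat, (1 <= n)%N ->
     breadth_eq K (@two_n_lt n) #|rel_noncovering (@two_n_lt n)| /\
     (#|rel_noncovering (@two_n_lt n)|%:R : rat)
       = ((n%:R - 1) * (3 * n%:R - 4)) / 2) /\
  (forall m n : nat, (2 <= m)%N -> (1 <= n)%N ->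
     breadth_eq K (@tree_lt m n) #|rel_noncovering (@tree_lt m n)| /\
     (#|rel_noncovering (@tree_lt m n)|%:R : rat)
       = ((n%:R - 2) * m%:R ^+ n.+1 + (1 - n%:R) * m%:R ^+ n + m%:R ^+ 2)
         / (m%:R - 1) ^+ 2).
Proof.
split; first by move=> n hn; split; [exact: chain_breadth | exact: rat_a].
split; first by move=> n hn; split; [exact: two_breadth | exact: rat_b].
move=> m n hm hn; split; [exact: tree_breadth | exact: rat_c].
Qed.
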